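(* Let $\Gamma$ be a positive recursive absorbing game with payoffs in $(0,1]$. For each player $i\in I$ there exists a stationary profile $x_{-i}\in\prod_{j\ne i}\Delta(A_j)$ of the other players such that $\gamma_i(\sigma_i,x_{-i})\le v_i$ for every strategy $\sigma_i\in\Sigma_i$ of player $i$ (i.e., a stationary minmaxing profile against $i$ exists).
   Context: A positive recursive absorbing game is $\Gamma=(I,(A_i)_{i\in I},(r_i)_{i\in I},p)$ with $I$ a finite set of players, $A_i$ finite nonempty action sets, $A=\prod_i A_i$, $r_i:A\to(0,1]$, $p:A\to[0,1]$. At each stage, if not yet absorbed, players choose actions $a^n\in A$; with probability $p(a^n)$ the game absorbs with terminal payoff $r(a^n)$, otherwise continues (payoff $0$ in the nonabsorbing state). $\theta$ is the absorption stage. Behavior strategies $\sigma_i:\bigcup_{n\ge0}A^n\to\Delta(A_i)$ form $\Sigma_i$; $\Sigma_{-i}=\prod_{j\neq i}\Sigma_j$. The undiscounted payoff is $\gamma(\sigma)=\mathbf E_\sigma[r(a^\theta)\mathbf 1_{\theta<\infty}]$. A stationary strategy of player $j$ plays a fixed mixed action $x_j\in\Delta(A_j)$ at every stage regardless of history. Player $i$'s minmax value is $v_i:=\inf_{\sigma_{-i}\in\Sigma_{-i}}\sup_{\sigma_i\in\Sigma_i}\gamma_i(\sigma_i,\sigma_{-i})$. *)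

(* Defs.v *)
From HB Require Import structures.
From mathcomp Require Import all_boot all_order all_algebra.
From mathcomp Require Import all_classical all_reals all_analysis.
Unset Printing Implicit Defensive.
Import Order.TTheory GRing.Theory Num.Theory.
Import numFieldNormedType.Exports.
Local Open Scope ring_scope.
Local Open Scope classical_set_scope.

Section AbsorbingGame.
Variables (R : realType) (I : finType) (A : I -> finType).

Definition profile := {dffun forall i, A i}.

Definition is_mixed (T : finType) (m : {ffun T -> R}) : Prop :=
  (forall t, 0 <= m t) /\ \sum_t m t = 1.

(* a behavior strategy of player j: histories (finite sequences of past
   action profiles, in chronological order) -> Delta(A_j) *)
Definition strat (j : I) := seq profile -> {ffun A j -> R}.
Definition is_strat (j : I) (s : strat j) : Prop := forall h, is_mixed (A j) (s h).

Definition sprofile := forall j : I, strat j.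

Definition prob_prof (mu : forall j : I, {ffun A j -> R}) (a : profile) : R :=
  \prod_j mu j (a j).

Variables (r : I -> profile -> R) (p : profile -> R).

(* probability that, starting after the history [pre], the play follows the
   actions [h] and the game is not absorbed along them *)
Fixpoint reach_from (sigma : sprofile) (pre h : seq profile) : R :=
  match h with
  | [::] => 1
  | a :: t => prob_prof (fun j => sigma j pre) a * (1 - p a)
              * reach_from sigma (rcons pre a) t
  end.

Definition reach (sigma : sprofile) (h : seq profile) := reach_from sigma [::] h.

(* expected payoff of player i coming from absorption at stage n+1
   (i.e. after a non-absorbing history of length n) *)
Definition stage_payoff (i : I) (sigma : sprofile) (n : nat) : R :=
  \sum_(h : n.-tuple profile)
     reach sigma h * \sum_(a : profile)
        prob_prof (fun j => sigma j h) a * p a * r i a.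

(* undiscounted payoff gamma_i(sigma) = E[r_i(a^theta) 1_{theta < oo}] *)
Definition gamma (i : I) (sigma : sprofile) : R :=
  limn (series (stage_payoff i sigma)).

Definition gamma_dev (i : I) (sigma : sprofile) (tau : strat i) : R :=
  gamma i (@dfwith I strat sigma i tau).

Definition minmax (i : I) : R :=
  inf [set y : R | exists sigma : sprofile,
          (forall j, j != i -> is_strat j (sigma j)) /\
          y = sup [set z : R | exists tau : strat i,
                     is_strat i tau /\ z = gamma_dev i sigma tau]].

Definition stationary (x : forall j : I, {ffun A j -> R}) : sprofile :=
  fun j _ => x j.

End AbsorbingGame.

(* Main.v *)
Require Import Defs.
From HB Require Import structures.
From mathcomp Require Import all_boot all_order all_algebra.
From mathcomp Require Import all_classical all_reals all_analysis.
From mathcomp Require Import ring lra.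
Import numFieldNormedType.Exports.
Import Order.TTheory GRing.Theory Num.Theory.
Local Open Scope ring_scope.
Local Open Scope classical_set_scope.

Lemma sum_tupleS (R : realType) (T : finType) n (F : n.+1.-tuple T -> R) :
  \sum_(t : n.+1.-tuple T) F t = \sum_(x : T) \sum_(t : n.-tuple T) F [tuple of x :: t].
Proof.
rewrite pair_big /=.
rewrite (reindex (fun xt : T * n.-tuple T => [tuple of xt.1 :: xt.2])) //.
exists (fun t : n.+1.-tuple T => (thead t, [tuple of behead t])) => [[x t] _|t _] /=.
  by congr pair; apply: val_inj.
by case/tupleP: t => x t; apply: val_inj.
Qed.

Section Main.
Variables (R : realType) (I : finType) (A : I -> finType).
Variables (r : I -> profile I A -> R) (p : profile I A -> R).
Hypothesis hr : forall i a, 0 < r i a /\ r i a <= 1.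
Hypothesis hp : forall a, 0 <= p a /\ p a <= 1.

Notation pm := (prob_prof R I A).
Notation mixp := (forall j, {ffun A j -> R}).
Notation prof := (profile I A).

Definition allmixed (mu : mixp) := forall j, is_mixed R (A j) (mu j).

Lemma sum_prob (mu : mixp) :
  \sum_(a : prof) pm mu a = \prod_j \sum_b mu j b.
Proof.
rewrite /prob_prof.
rewrite (reindex (@dffun_of_fprod I A)); last first.
  by exists (@fprod_of_dffun I A) => x _; [exact: dffun_of_fprodK|exact: fprod_of_dffunK].
under eq_bigr do under eq_bigr do rewrite ffunE.
have := @big_fprod R 0 1 *%R +%R I A mu.
move=> ->.
rewrite -(@bigA_distr_big_dep R 0 1 *%R +%R I _ (tagged_with A) (fun i t => untag 0 (mu i) t)).
apply: eq_bigr => j _.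
by rewrite (big_tag (fun j => mu j)).
Qed.

Lemma pm_ge0 mu : allmixed mu -> forall a, 0 <= pm mu a.
Proof. by move=> hm a; apply: prodr_ge0 => j _; case: (hm j). Qed.

Lemma pm_sum1 mu : allmixed mu -> \sum_a pm mu a = 1.
Proof. by move=> hm; rewrite sum_prob big1 // => j _; case: (hm j). Qed.

Variable ii : I.
Definition gpr a := p a * r ii a.
Definition gprc c a := p a * (r ii a - c).


Definition dlt (b : A ii) : {ffun A ii -> R} := [ffun a => (a == b)%:R].
Definition upd (x : mixp) (b : A ii) : mixp :=
  @dfwith I (fun j => {ffun A j -> R}) x ii (dlt b).
Definition E c x b := \sum_a pm (upd x b) a * gprc c a.

Lemma sum_dlt (f : A ii -> R) b : \sum_t f t * (t == b)%:R = f b.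
Proof.
rewrite (bigD1 b) //= eqxx mulr1 big1 ?addr0 // => t /negbTE ->.
by rewrite mulr0.
Qed.

Lemma dlt_mixed b : is_mixed R (A ii) (dlt b).
Proof.
split; first by move=> t; rewrite ffunE ler0n.
rewrite -[RHS](@sum_dlt (fun=> 1) b); apply: eq_bigr => t _.
by rewrite ffunE mul1r.
Qed.

Lemma upd_in (x : mixp) b : upd x b ii = dlt b.
Proof. exact: dfwith_in. Qed.

Lemma upd_out (x : mixp) b j : ii != j -> upd x b j = x j.
Proof. exact: dfwith_out. Qed.

Lemma upd_mixed x b : (forall j, j != ii -> is_mixed R (A j) (x j)) -> allmixed (upd x b).
Proof.
move=> hx j; rewrite /upd; case: dfwithP => [|k nk]; first exact: dlt_mixed.
by apply: hx; rewrite eq_sym.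
Qed.

Lemma pm_ext (mu nu : mixp) a : (forall j t, mu j t = nu j t) -> pm mu a = pm nu a.
Proof. by move=> e; apply: eq_bigr => j _; rewrite e. Qed.

Lemma upd_ext (mu nu : mixp) b : (forall j, j != ii -> forall t, mu j t = nu j t) ->
  forall j t, upd mu b j t = upd nu b j t.
Proof.
move=> e j.
case: (eqVneq ii j) => [<-|nij] t; first by rewrite !upd_in.
by rewrite !upd_out // e // eq_sym.
Qed.

Lemma E_ext c (mu nu : mixp) b : (forall j, j != ii -> forall t, mu j t = nu j t) ->
  E c mu b = E c nu b.
Proof.
by move=> e; apply: eq_bigr => a _; rewrite (pm_ext _ _ _ (upd_ext _ _ _ e)).
Qed.

Lemma pm_split (mu : mixp) a : pm mu a = mu ii (a ii) * \prod_(j | j != ii) mu j (a j).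
Proof. by rewrite /prob_prof (bigD1 ii). Qed.

Lemma pm_upd (mu : mixp) b a :
  pm (upd mu b) a = (a ii == b)%:R * \prod_(j | j != ii) mu j (a j).
Proof.
rewrite pm_split upd_in ffunE; congr (_ * _).
by apply: eq_bigr => j nj; rewrite upd_out // eq_sym.
Qed.

Lemma lin_decomp (mu : mixp) g :
  \sum_a pm mu a * g a = \sum_b mu ii b * \sum_a pm (upd mu b) a * g a.
Proof.
under [RHS]eq_bigr do rewrite mulr_sumr.
rewrite exchange_big; apply: eq_bigr => a _ /=.
rewrite pm_split.
rewrite (eq_bigr (fun b => mu ii b * (\prod_(j | j != ii) mu j (a j)) * g a * (b == a ii)%:R)); last first.
  by move=> b _; rewrite pm_upd eq_sym; ring.
by rewrite (@sum_dlt (fun t => mu ii t * (\prod_(j | j != ii) mu j (a j)) * g a) (a ii)).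
Qed.

Definition pmx (x : mixp) := prob_prof R I A x.

Lemma E_shift c w x b : allmixed x -> w <= c -> E w x b - (c - w) <= E c x b.
Proof.
move=> hx wc.
have hu := upd_mixed x b (fun j _ => hx j).
have : E c x b = E w x b - (c - w) * \sum_a pm (upd x b) a * p a.
  rewrite /E mulr_sumr -sumrB; apply: eq_bigr => a _; rewrite /gprc; ring.
move=> ->; rewrite lerB // ler_piMr ?subr_ge0 //.
rewrite -(pm_sum1 _ hu); apply: ler_sum => a _.
by rewrite ler_piMr ?(pm_ge0 _ hu) //; case: (hp a).
Qed.

Variable b0 : A ii.

Definition maxl (f : A ii -> R) (s : seq (A ii)) := foldr (fun b m => Num.max (f b) m) (f b0) s.

Lemma maxl_ge f s b : b \in s -> f b <= maxl f s.
Proof.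
elim: s => //= b' s IH; rewrite in_cons => /orP[/eqP->|/IH h].
  by rewrite le_max lexx.
by rewrite le_max h orbT.
Qed.

Lemma maxl_att f s : exists b, maxl f s = f b.
Proof.
elim: s => [|b s [b' IH]] /=; first by exists b0.
rewrite IH; case: (leP (f b) (f b')) => h.
  by exists b'.
by exists b.
Qed.

Definition Fm c x := maxl (E c x) (enum (A ii)).

Lemma Fm_ge c x b : E c x b <= Fm c x.
Proof. by apply: maxl_ge; rewrite mem_enum. Qed.

Lemma Fm_att c x : exists b, Fm c x = E c x b.
Proof. exact: maxl_att. Qed.

Lemma Fm_ext c (mu nu : mixp) : (forall j, j != ii -> forall t, mu j t = nu j t) ->
  Fm c mu = Fm c nu.
Proof.
move=> e; rewrite /Fm /maxl; elim: (enum (A ii)) => /= [|b s ->];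
  by rewrite (E_ext _ _ _ _ e).
Qed.

Lemma Fm_shift c w x : allmixed x -> w <= c -> Fm w x - (c - w) <= Fm c x.
Proof.
move=> hx wc; have [b ->] := Fm_att w x.
by apply: le_trans (E_shift _ _ _ _ hx wc) (Fm_ge _ _ _).
Qed.


Definition TT := {j : I & A j}.
Definition nT := #|{: TT}|.
Definition xv (v : 'rV[R]_nT) : mixp :=
  fun j => [ffun a => v ord0 (enum_rank (Tagged (fun j => A j) a))].
Definition vx (x : mixp) : 'rV[R]_nT :=
  \row_k x (tag (enum_val k)) (tagged (enum_val k)).

Lemma xv_vx x j t : xv (vx x) j t = x j t.
Proof. by rewrite ffunE mxE enum_rankK. Qed.

Definition Box := [set v : 'rV[R]_nT | forall k, `[(0:R), 1]%classic (v ord0 k)].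
Definition Csum := [set v : 'rV[R]_nT | forall j, \sum_a xv v j a = 1].
Definition Xs := Box `&` Csum.

Lemma cont_sum (J : Type) (s : seq J) (f : J -> 'rV[R]_nT -> R) :
  (forall j, continuous (f j)) -> continuous (fun v => \sum_(j <- s) f j v).
Proof.
move=> hf; elim: s => [|j s IH].
  by under eq_fun do rewrite big_nil; exact: cst_continuous.
under eq_fun do rewrite big_cons.
by move=> v; apply: continuousD; [exact: hf|exact: IH].
Qed.

Lemma cont_prod (J : Type) (s : seq J) (f : J -> 'rV[R]_nT -> R) :
  (forall j, continuous (f j)) -> continuous (fun v => \prod_(j <- s) f j v).
Proof.
move=> hf; elim: s => [|j s IH].
  by under eq_fun do rewrite big_nil; exact: cst_continuous.
under eq_fun do rewrite big_cons.
by move=> v; apply: (@continuousM R _ (f j) (fun v => \prod_(j <- s) f j v) v); [exact: hf|exact: IH].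
Qed.

Lemma cont_xv j t : continuous (fun v => xv v j t).
Proof.
under eq_fun do rewrite ffunE.
exact: coord_continuous.
Qed.

Lemma cont_pm b a : continuous (fun v => pm (upd (xv v) b) a).
Proof.
apply: cont_prod => j.
case: (eqVneq ii j) => [<-|nij].
  by under eq_fun do rewrite upd_in; exact: cst_continuous.
by under eq_fun do rewrite upd_out //; exact: cont_xv.
Qed.

Lemma cont_E c b : continuous (fun v => E c (xv v) b).
Proof.
apply: cont_sum => a v; apply: (@continuousM R _ (fun v => pm (upd (xv v) b) a) (fun=> gprc c a) v); first exact: cont_pm.
exact: cst_continuous.
Qed.

Lemma cont_Fm c : continuous (fun v => Fm c (xv v)).
Proof.
rewrite /Fm /maxl; elim: (enum (A ii)) => [|b s IH] /=; first exact: cont_E.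
move=> v; apply: (@continuous_max _ _ (fun v => E c (xv v) b)); first exact: cont_E.
exact: IH.
Qed.

Lemma Csum_closed : closed Csum.
Proof.
have -> : Csum = \bigcap_(j in setT) ((fun v => \sum_a xv v j a) @^-1` [set 1]).
  by apply/seteqP; split => v /= h j; [move=> _; apply: h | apply: h].
apply: closed_bigI => j _; apply: preimage_closed; last exact: closed_eq.
by move=> v _; apply: cont_sum => a; exact: cont_xv.
Qed.

Lemma Xs_compact : compact Xs.
Proof.
apply: compact_closedI; last exact: Csum_closed.
apply: (@rV_compact R nT (fun=> `[(0:R), 1]%classic)) => _.
exact: segment_compact.
Qed.

Lemma xv_mixed v : Xs v -> allmixed (xv v).
Proof.
move=> [hb hc] j; split => // t; rewrite ffunE.
by have := hb (enum_rank (Tagged (fun j => A j) t)); rewrite /= in_itv /= => /andP[].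
Qed.

Lemma mixed_le1 (T : finType) (m : {ffun T -> R}) t : is_mixed R T m -> m t <= 1.
Proof.
move=> [h0 h1]; rewrite -h1 (bigD1 t) //= lerDl.
by apply: sumr_ge0 => u _; exact: h0.
Qed.

Lemma vx_Xs x : allmixed x -> Xs (vx x).
Proof.
move=> hx; split.
  move=> k; rewrite /= mxE in_itv /=; apply/andP; split.
    by case: (hx (tag (enum_val k))) => h _; exact: h.
  exact: mixed_le1.
move=> j /=; rewrite -[RHS](proj2 (hx j)); apply: eq_bigr => t _.
exact: xv_vx.
Qed.

Lemma EVT c : Xs !=set0 ->
  exists2 v, Xs v & forall t, Xs t -> Fm c (xv v) <= Fm c (xv t).
Proof.
move=> ne; have [v vX h] := compact_EVT_min ne Xs_compact
   (@continuous_subspaceT _ _ Xs _ (cont_Fm c)).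
exists v; first by rewrite inE in vX.
by move=> t tX; apply: h; rewrite inE.
Qed.

Section Game.
Variable sigma : sprofile R I A.
Definition sH (H : seq prof) : mixp := fun j => sigma j H.
Hypothesis Hs : forall H, allmixed (sH H).

Definition W k pre (F : seq prof -> R) :=
  \sum_(h : k.-tuple prof) reach_from R I A p sigma pre h * F (pre ++ h).
Definition G (g : prof -> R) H := \sum_a pm (sH H) a * g a.
Definition X pre a := pm (sH pre) a * (1 - p a).

Lemma X_ge0 pre a : 0 <= X pre a.
Proof. by apply: mulr_ge0; [exact: pm_ge0|rewrite subr_ge0; case: (hp a)]. Qed.

Lemma sumX pre : \sum_a X pre a = 1 - G p pre.
Proof.
rewrite /X /G; under eq_bigr do rewrite mulrBr mulr1.
by rewrite sumrB (pm_sum1 _ (Hs pre)).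
Qed.

Lemma W0 pre F : W 0 pre F = F pre.
Proof.
rewrite /W (big_pred1 [tuple]) /=; last by move=> t; rewrite /= (tuple0 t); apply/esym/eqP.
by rewrite cats0 mul1r.
Qed.

Lemma WS k pre F : W k.+1 pre F = \sum_a X pre a * W k (rcons pre a) F.
Proof.
rewrite /W sum_tupleS; apply: eq_bigr => a _; rewrite mulr_sumr.
apply: eq_bigr => t _ /=; rewrite -cat_rcons.
by rewrite /X /sH !mulrA.
Qed.

Lemma W_ge0 k pre F : (forall H, 0 <= F H) -> 0 <= W k pre F.
Proof.
move=> hF; elim: k pre => [|k IH] pre; first by rewrite W0.
by rewrite WS; apply: sumr_ge0 => a _; apply: mulr_ge0; [exact: X_ge0|exact: IH].
Qed.

Lemma W_lin k pre F1 F2 c :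
  W k pre (fun H => F1 H + c * F2 H) = W k pre F1 + c * W k pre F2.
Proof.
rewrite /W mulr_sumr -big_split; apply: eq_bigr => h _ /=.
by rewrite mulrDr mulrCA.
Qed.

Lemma W_const k pre : W k pre (fun=> 1) = \sum_(h : k.-tuple prof) reach_from R I A p sigma pre h.
Proof. by rewrite /W; apply: eq_bigr => h _; rewrite mulr1. Qed.

Lemma sumWS N pre F :
  \sum_(k < N) W k.+1 pre F = \sum_a X pre a * \sum_(k < N) W k (rcons pre a) F.
Proof.
under eq_bigr do rewrite WS.
rewrite exchange_big; apply: eq_bigr => a _; by rewrite mulr_sumr.
Qed.

Lemma sumW_ge0 N pre g : (forall H, 0 <= G g H) -> 0 <= \sum_(k < N) W k pre (G g).
Proof.
move=> hg; elim: N pre => [|N IH] pre; first by rewrite big_ord0.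
rewrite big_ord_recl W0 sumWS; apply: addr_ge0 => //.
by apply: sumr_ge0 => a _; apply: mulr_ge0; [exact: X_ge0|exact: IH].
Qed.

Lemma absorb N pre : \sum_(k < N) W k pre (G p) = 1 - W N pre (fun=> 1).
Proof.
elim: N pre => [|N IH] pre; first by rewrite big_ord0 W0 subrr.
rewrite big_ord_recl W0 sumWS WS.
under eq_bigr do rewrite IH mulrBr mulr1.
by rewrite sumrB sumX; ring.
Qed.

Lemma Gp_le1 H : G p H <= 1.
Proof.
rewrite -(pm_sum1 _ (Hs H)) /G; apply: ler_sum => a _.
by rewrite ler_piMr ?(pm_ge0 _ (Hs H)) //; case: (hp a).
Qed.

Lemma decay d N pre : 0 <= d -> (forall H, d <= G p H) ->
  W N pre (fun=> 1) <= (1 - d) ^+ N.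
Proof.
move=> d0 hd; have d1 : 0 <= 1 - d by rewrite subr_ge0 (le_trans (hd [::])) ?Gp_le1.
elim: N pre => [|N IH] pre; first by rewrite W0 expr0.
rewrite WS exprS.
apply: (@le_trans _ _ (\sum_a X pre a * (1 - d) ^+ N)).
  by apply: ler_sum => a _; apply: ler_wpM2l; [exact: X_ge0|exact: IH].
rewrite -mulr_suml sumX; apply: ler_wpM2r; first exact: exprn_ge0.
by rewrite lerB.
Qed.


Lemma eq_W k pre F1 F2 : (forall H, F1 H = F2 H) -> W k pre F1 = W k pre F2.
Proof. by move=> e; apply: eq_bigr => h _; rewrite e. Qed.

Lemma W_opp k pre F : W k pre (fun H => - F H) = - W k pre F.
Proof. by rewrite /W -sumrN; apply: eq_bigr => h _; rewrite mulrN. Qed.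

Lemma sumW_ge0' N pre F : (forall H, 0 <= F H) -> 0 <= \sum_(k < N) W k pre F.
Proof.
move=> hg; elim: N pre => [|N IH] pre; first by rewrite big_ord0.
rewrite big_ord_recl W0 sumWS; apply: addr_ge0 => //.
by apply: sumr_ge0 => a _; apply: mulr_ge0; [exact: X_ge0|exact: IH].
Qed.

Lemma G_split c H : G gpr H = G (gprc c) H + c * G p H.
Proof.
rewrite /G mulr_sumr -big_split; apply: eq_bigr => a _ /=.
rewrite /gpr /gprc; ring.
Qed.

Lemma sum_split c N :
  \sum_(k < N) W k [::] (G gpr) =
  \sum_(k < N) W k [::] (G (gprc c)) + c * (1 - W N [::] (fun=> 1)).
Proof.
rewrite -absorb mulr_sumr -big_split; apply: eq_bigr => k _ /=.
by rewrite -W_lin; apply: eq_W => H; rewrite (G_split c).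
Qed.

Lemma stage_eq k : stage_payoff R I A r p ii sigma k = W k [::] (G gpr).
Proof.
rewrite /stage_payoff /W; apply: eq_bigr => h _; congr (_ * _).
by rewrite /G; apply: eq_bigr => a _; rewrite /gpr mulrA.
Qed.

Lemma partial_eq N : series (stage_payoff R I A r p ii sigma) N = \sum_(k < N) W k [::] (G gpr).
Proof.
rewrite /series /= big_mkord; apply: eq_bigr => k _; exact: stage_eq.
Qed.

Lemma stage_ge0 k : 0 <= stage_payoff R I A r p ii sigma k.
Proof.
rewrite stage_eq; apply: W_ge0 => H; apply: sumr_ge0 => a _.
apply: mulr_ge0; first exact: (pm_ge0 _ (Hs H)).
by apply: mulr_ge0; [case: (hp a)|apply: ltW; case: (hr ii a)].
Qed.

Lemma partial_le c N : 0 <= c -> (forall H, G (gprc c) H <= 0) ->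
  series (stage_payoff R I A r p ii sigma) N <= c.
Proof.
move=> c0 hc; rewrite partial_eq (sum_split c).
have h1 : \sum_(k < N) W k [::] (G (gprc c)) <= 0.
  rewrite -oppr_ge0 -sumrN; under eq_bigr do rewrite -W_opp.
  by apply: sumW_ge0' => H; rewrite oppr_ge0.
have h2 : 0 <= W N [::] (fun=> 1) by apply: W_ge0.
by rewrite -[leRHS]add0r lerD // ler_piMr // lerBlDr lerDl.
Qed.

Lemma Gc1 H : G (gprc 1) H <= 0.
Proof.
rewrite /G -oppr_ge0 -sumrN; apply: sumr_ge0 => a _.
rewrite -mulrN; apply: mulr_ge0; first exact: (pm_ge0 _ (Hs H)).
rewrite /gprc -mulrN; apply: mulr_ge0; first by case: (hp a).
by rewrite oppr_ge0 subr_le0; case: (hr ii a).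
Qed.

Lemma series_cvg : cvgn (series (stage_payoff R I A r p ii sigma)).
Proof.
apply: nondecreasing_is_cvgn.
  by apply: nondecreasing_series => n _ _; exact: stage_ge0.
by exists 1 => _ [n _ <-]; apply: partial_le => //; exact: Gc1.
Qed.

Lemma gamma_le c : 0 <= c -> (forall H, G (gprc c) H <= 0) ->
  gamma R I A r p ii sigma <= c.
Proof.
move=> c0 hc; apply: limr_le; first exact: series_cvg.
by apply: nearW => n; apply: partial_le.
Qed.

Lemma gamma_ge0 : 0 <= gamma R I A r p ii sigma.
Proof.
apply: limr_ge; first exact: series_cvg.
apply: nearW => n; rewrite partial_eq; apply: sumW_ge0' => H.
apply: sumr_ge0 => a _; apply: mulr_ge0; first exact: (pm_ge0 _ (Hs H)).
by apply: mulr_ge0; [case: (hp a)|apply: ltW; case: (hr ii a)].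
Qed.

Lemma gamma_ge c d : 0 <= c -> 0 < d -> (forall H, d <= G (gprc c) H) ->
  c <= gamma R I A r p ii sigma.
Proof.
move=> c0 d0 hc.
have hd : forall H, d <= G p H.
  move=> H; apply: (le_trans (hc H)); rewrite /G; apply: ler_sum => a _.
  apply: ler_wpM2l; first exact: (pm_ge0 _ (Hs H)).
  rewrite /gprc ler_piMr; [by case: (hp a)|by case: (hp a)|].
  by rewrite lerBlDr (le_trans (proj2 (hr ii a))) // lerDl.
have low : forall N, c - c * (1 - d) ^+ N <= series (stage_payoff R I A r p ii sigma) N.
  move=> N; rewrite partial_eq (sum_split c).
  have h1 : 0 <= \sum_(k < N) W k [::] (G (gprc c)).
    by apply: sumW_ge0' => H; apply: le_trans (hc H); exact: ltW.
  rewrite -[leLHS]add0r lerD // mulrBr mulr1 lerB //.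
  by apply: ler_wpM2l => //; apply: decay => //; exact: ltW.
have q1 : `|1 - d| < 1.
  have dle : d <= 1 by apply: le_trans (hd [::]) (Gp_le1 _).
  by rewrite ger0_norm ?subr_ge0 // ltrBlDr ltrDl.
apply: (@cvgr_to_le _ \oo _ _ (fun N => c - c * (1 - d) ^+ N)).
  rewrite -[X in _ --> X]subr0.
  apply: cvgB; first exact: cvg_cst.
  rewrite -(mulr0 c); apply: cvgM; first exact: cvg_cst.
  exact: cvg_expr.
apply: nearW => N; apply: le_trans (low N) _.
apply: nondecreasing_cvgn_le; last exact: series_cvg.
by apply: nondecreasing_series => n _ _; exact: stage_ge0.
Qed.

End Game.

Hypothesis Xne : Xs !=set0.

Definition Sset := [set c : R | 0 <= c /\ exists2 v, Xs v & Fm c (xv v) <= 0].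
Definition w := inf Sset.

Lemma E1_le0 x b : allmixed x -> E 1 x b <= 0.
Proof.
move=> hx; have hu := upd_mixed x b (fun j _ => hx j).
rewrite /E -oppr_ge0 -sumrN; apply: sumr_ge0 => a _.
rewrite -mulrN; apply: mulr_ge0; first exact: (pm_ge0 _ hu).
rewrite /gprc -mulrN; apply: mulr_ge0; first by case: (hp a).
by rewrite oppr_ge0 subr_le0; case: (hr ii a).
Qed.

Lemma Sset_ne : Sset !=set0.
Proof.
have [v vX] := Xne; exists 1; split => //; exists v => //.
have [b ->] := Fm_att 1 (xv v); exact: E1_le0 (xv_mixed _ vX).
Qed.

Lemma Sset_lb : has_lbound Sset.
Proof. by exists 0 => y []. Qed.

Lemma w_ge0 : 0 <= w.
Proof. by apply: lb_le_inf Sset_ne _ => y []. Qed.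

Lemma w_att : exists2 v, Xs v & Fm w (xv v) <= 0.
Proof.
have [v vX hv] := EVT w Xne; exists v => //.
rewrite leNgt; apply/negP => mu0.
have : w + Fm w (xv v) <= w.
  apply: lb_le_inf; first exact: Sset_ne.
  move=> c [c0 [v' v'X hc]].
  have wc : w <= c by apply: (ge_inf Sset_lb); split => //; exists v'.
  have h1 := Fm_shift c w (xv v') (xv_mixed v' v'X) wc.
  have h2 := hv v' v'X.
  lra.
lra.
Qed.

Lemma below_w c : 0 <= c -> c < w ->
  exists2 d, 0 < d & forall x, allmixed x -> d <= Fm c x.
Proof.
move=> c0 cw; have [v vX hv] := EVT c Xne; exists (Fm c (xv v)).
  rewrite ltNge; apply/negP => h.
  have : w <= c by apply: (ge_inf Sset_lb); split => //; exists v.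
  lra.
move=> x hx; rewrite -(Fm_ext c (xv (vx x)) x); first exact: hv (vx_Xs x hx).
by move=> j _ t; exact: xv_vx.
Qed.

Lemma swith_in (sigma : sprofile R I A) (tau : strat R I A ii) :
  @dfwith I (strat R I A) sigma ii tau ii = tau.
Proof. exact: dfwith_in. Qed.

Lemma swith_out (sigma : sprofile R I A) (tau : strat R I A ii) j :
  ii != j -> @dfwith I (strat R I A) sigma ii tau j = sigma j.
Proof. exact: dfwith_out. Qed.

Lemma Hs_dev (sigma : sprofile R I A) (tau : strat R I A ii) :
  (forall j, j != ii -> is_strat R I A j (sigma j)) -> is_strat R I A ii tau ->
  forall H, allmixed (sH (@dfwith I (strat R I A) sigma ii tau) H).
Proof.
move=> hs ht H j; rewrite /sH.
case: (eqVneq ii j) => [<-|nij]; first by rewrite swith_in; exact: ht.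
by rewrite swith_out //; apply: hs; rewrite eq_sym.
Qed.

Lemma stat_upper (x : mixp) (tau : strat R I A ii) : allmixed x ->
  is_strat R I A ii tau -> (forall b, E w x b <= 0) ->
  gamma_dev R I A r p ii (stationary R I A x) tau <= w.
Proof.
move=> hx ht hE; rewrite /gamma_dev.
have Hs := Hs_dev (stationary R I A x) tau (fun j _ _ => hx j) ht.
apply: (gamma_le _ Hs w w_ge0) => H.
rewrite /G lin_decomp -oppr_ge0 -sumrN; apply: sumr_ge0 => b _.
rewrite -mulrN; apply: mulr_ge0.
  by rewrite /sH swith_in; case: (ht H) => h _; exact: h.
rewrite oppr_ge0; apply: le_trans (hE b); rewrite le_eqVlt; apply/orP; left; apply/eqP.
apply: E_ext => j nj t; rewrite /sH swith_out //; rewrite eq_sym //.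
Qed.

Lemma lower (sigma : sprofile R I A) c :
  (forall j, j != ii -> is_strat R I A j (sigma j)) -> 0 <= c -> c < w ->
  exists tau, is_strat R I A ii tau /\ c <= gamma_dev R I A r p ii sigma tau.
Proof.
move=> hs c0 cw; have [d d0 hd] := below_w c c0 cw.
pose ext H : mixp := upd (sH sigma H) b0.
have extm : forall H, allmixed (ext H).
  by move=> H; apply: upd_mixed => j nj; exact: hs.
have att : forall H, exists b, Fm c (ext H) == E c (ext H) b.
  by move=> H; have [b e] := Fm_att c (ext H); exists b; apply/eqP.
pose bst H := xchoose (att H).
pose tau : strat R I A ii := fun H => dlt (bst H).
have ht : is_strat R I A ii tau by move=> H; exact: dlt_mixed.
exists tau; split => //; rewrite /gamma_dev.
have Hs := Hs_dev sigma tau hs ht.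
apply: (gamma_ge _ Hs c d c0 d0) => H.
rewrite /G lin_decomp.
rewrite (eq_bigr (fun b => (\sum_a pm (upd (sH (@dfwith I (strat R I A) sigma ii tau) H) b) a * gprc c a) * (b == bst H)%:R)); last first.
  by move=> b _; rewrite /sH swith_in /tau ffunE mulrC.
rewrite (@sum_dlt (fun b => \sum_a pm (upd (sH (@dfwith I (strat R I A) sigma ii tau) H) b) a * gprc c a)).
have -> : \sum_a pm (upd (sH (@dfwith I (strat R I A) sigma ii tau) H) (bst H)) a * gprc c a
   = E c (ext H) (bst H).
  apply: E_ext => j nj t; rewrite /ext upd_out ?(eq_sym ii) // /sH swith_out //.
  by rewrite eq_sym.
rewrite /bst -(eqP (xchooseP (att H))); exact: hd.
Qed.

Lemma main_i : exists x : mixp,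
    (forall j, j != ii -> is_mixed R (A j) (x j)) /\
    forall tau : strat R I A ii, is_strat R I A ii tau ->
      gamma_dev R I A r p ii (stationary R I A x) tau <= minmax R I A r p ii.
Proof.
have [v vX hv] := w_att.
have hx := xv_mixed v vX.
have hE : forall b, E w (xv v) b <= 0 by move=> b; apply: le_trans (Fm_ge _ _ b) hv.
exists (xv v); split; first by move=> j _; exact: hx.
move=> tau ht; apply: le_trans (stat_upper _ _ hx ht hE) _.
rewrite /minmax; apply: lb_le_inf.
  exists (sup [set z : R | exists tau0 : strat R I A ii, is_strat R I A ii tau0 /\
      z = gamma_dev R I A r p ii (stationary R I A (xv v)) tau0]).
  exists (stationary R I A (xv v)); split => // j _ H; exact: hx.
move=> y [sigma [hs ->]].
set Z := [set z : R | _].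
have tau0m : is_strat R I A ii (fun=> dlt b0) by move=> H; exact: dlt_mixed.
have Zub : has_ubound Z.
  exists 1 => z [t [htt ->]]; rewrite /gamma_dev.
  apply: (gamma_le _ (Hs_dev sigma t hs htt) 1 ler01) => H.
  exact: Gc1 (Hs_dev sigma t hs htt) H.
have Z0 : Z (gamma_dev R I A r p ii sigma (fun=> dlt b0)) by exists (fun=> dlt b0).
have s0 : 0 <= sup Z.
  apply: le_trans (ub_le_sup Zub Z0); rewrite /gamma_dev.
  exact: gamma_ge0 (Hs_dev sigma _ hs tau0m).
rewrite leNgt; apply/negP => sw.
have c0 : 0 <= (sup Z + w) / 2 by lra.
have cw : (sup Z + w) / 2 < w by lra.
have [t [htt ht2]] := lower sigma ((sup Z + w) / 2) hs c0 cw.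
have Zt : Z (gamma_dev R I A r p ii sigma t) by exists t.
have := ub_le_sup Zub Zt.
lra.
Qed.

End Main.

Theorem mainTheorem3 (R : realType) (I : finType) (A : I -> finType)
  (r : I -> profile I A -> R) (p : profile I A -> R)
  (hA : forall i, (0 < #|A i|)%N)
  (hr : forall i a, 0 < r i a /\ r i a <= 1)
  (hp : forall a, 0 <= p a /\ p a <= 1) :
  forall i : I, exists x : forall j : I, {ffun A j -> R},
    (forall j, j != i -> is_mixed R (A j) (x j)) /\
    forall tau : strat R I A i, is_strat R I A i tau ->
      gamma_dev R I A r p i (stationary R I A x) tau <= minmax R I A r p i.
Proof.
move=> i.
have [b0 _] : exists b : A i, b \in A i by apply/card_gt0P; exact: hA.
pose x0 : forall j, {ffun A j -> R} := fun j => [ffun _ => (#|A j|%:R)^-1].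
have hx0 : allmixed R I A x0.
  move=> j; split; first by move=> t; rewrite ffunE invr_ge0 ler0n.
  under eq_bigr do rewrite ffunE.
  rewrite sumr_const (_ : #|xpredT| = #|A j|) // -[LHS]mulr_natl mulfV // pnatr_eq0 -lt0n; exact: hA.
have Xne : Xs R I A !=set0 by exists (vx R I A x0); exact: vx_Xs.
exact: (@main_i R I A r p hr hp i b0 Xne).
Qed.
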